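(* Let $\mathcal{M}\in\mathbb{R}^{n\times n}$ be a Hurwitz matrix and let $\mu>0$. Let $P$ be the unique symmetric positive definite solution of $P\mathcal{M}+\mathcal{M}^TP=-2\mu I_n$. Then $$\bar{\sigma}(P)\,\bar{\sigma}(\mathcal{M})\le-\mu \quad\text{and}\quad \bar{\sigma}(P)\,\bar{\sigma}(\mathcal{M}+\mathcal{M}^* )\ge -2\mu.$$ In particular, if $\mathcal{M}$ is Hermitian (i.e. symmetric), then $\bar{\sigma}(P)\,\bar{\sigma}(\mathcal{M})=-\mu$.
   Context: $\bar{\sigma}(X)$ denotes the maximum real part of the eigenvalues of a square matrix $X$ (for a Hermitian matrix, its largest eigenvalue). $\mathcal{M}^*$ is the conjugate transpose of $\mathcal{M}$ (here equal to $\mathcal{M}^T$). A matrix is Hurwitz if all its eigenvalues have negative real part. *)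

(* Defs.v *)
From HB Require Import structures.
From mathcomp Require Import all_boot all_order all_algebra.
From mathcomp Require Import complex.
Set Implicit Arguments. Unset Strict Implicit. Unset Printing Implicit Defensive.
Import Order.TTheory GRing.Theory Num.Theory.
Local Open Scope ring_scope.
Local Open Scope complex_scope.

Definition cplx_mx (R : rcfType) (n : nat) (X : 'M[R]_n) : 'M[R[i]]_n :=
  map_mx (fun x => x%:C) X.

Definition ceig (R : rcfType) (n : nat) (X : 'M[R]_n) (lam : R[i]) : bool :=
  eigenvalue (cplx_mx X) lam.

Definition hurwitz (R : rcfType) (n : nat) (X : 'M[R]_n) : Prop :=
  forall lam : R[i], ceig X lam -> complex.Re lam < 0.

Definition is_sigma_bar (R : rcfType) (n : nat) (X : 'M[R]_n) (s : R) : Prop :=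
  (exists2 lam : R[i], ceig X lam & complex.Re lam = s) /\
  (forall lam : R[i], ceig X lam -> complex.Re lam <= s).

Definition sym_posdef (R : rcfType) (n : nat) (P : 'M[R]_n) : Prop :=
  P^T = P /\ (forall x : 'cV[R]_n, x != 0 -> 0 < (x^T *m P *m x) 0 0).

(* Main.v *)
Require Import Defs.
From HB Require Import structures.
From mathcomp Require Import all_boot all_order all_algebra.
From mathcomp Require Import complex sesquilinear spectral ring lra.
Import Order.TTheory GRing.Theory Num.Theory Num.Def.
Local Open Scope ring_scope.
Lemma char_poly_trmx (F : fieldType) n (A : 'M[F]_n) : char_poly A^T = char_poly A.
Proof.
rewrite /char_poly -det_tr /char_poly_mx.
congr (\det _); apply/matrixP => i j; rewrite !mxE.
by rewrite eq_sym.
Qed.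
Lemma eigenvalue_trmx (F : fieldType) n (A : 'M[F]_n) a : eigenvalue A^T a = eigenvalue A a.
Proof. by rewrite !eigenvalue_root_char char_poly_trmx. Qed.
Local Open Scope sesquilinear_scope.

Lemma Re_sum (R : rcfType) (I : Type) (r : seq I) (F : I -> R[i]) :
  complex.Re (\sum_(i <- r) F i) = \sum_(i <- r) complex.Re (F i).
Proof. exact: raddf_sum. Qed.

Lemma term_le (R : rcfType) (w d : R[i]) (s : R) : complex.Re d <= s ->
  complex.Re (w * d * conjC w) <= s * complex.Re (w * conjC w).
Proof.
case: w => a b; case: d => c e /= Hc.
have h : 0 <= a * a + b * b by rewrite addr_ge0 // -expr2 sqr_ge0.
have -> : (a * c - b * e) * a - (a * e + b * c) * - b = c * (a * a + b * b) by ring.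
have -> : a * a - b * - b = a * a + b * b by ring.
exact: ler_wpM2r.
Qed.

Lemma tCmul (R : rcfType) m n p (A : 'M[R[i]]_(m,n)) (B : 'M[R[i]]_(n,p)) :
  (A *m B)^t* = B^t* *m A^t*.
Proof. by rewrite trmx_mul map_mxM. Qed.

Lemma rayleigh (R : rcfType) n (A : 'M[R[i]]_n) (s : R) :
  A \is normalmx -> (forall a, eigenvalue A a -> complex.Re a <= s) ->
  forall v : 'rV_n, complex.Re ((v *m A *m v^t*) 0 0) <= s * complex.Re ((v *m v^t*) 0 0).
Proof.
move=> /orthomx_spectralP; set U := spectralmx A; set d := spectral_diag A => eA Hs v.
have Uu : U \is unitarymx := spectral_unitarymx A.
rewrite invmx_unitary // in eA.
set w := v *m U^t*.
have Ew : w^t* = U *m v^t* by rewrite /w tCmul trmxCK.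
have -> : v *m A *m v^t* = w *m diag_mx d *m w^t*.
  by rewrite Ew eA /w !mulmxA.
have -> : v *m v^t* = w *m w^t*.
  by rewrite Ew /w mulmxA mulmxKtV.
rewrite mul_mx_diag !mxE !Re_sum mulr_sumr; apply: ler_sum => j _.
rewrite !mxE; apply: term_le; apply: Hs.
apply/eigenvalueP; exists (row j U).
  rewrite eA !mulmxA -row_mul -(row_mul j (U *m U^t*)).
  by rewrite (unitarymxP Uu) mul1mx row_diag_mx -scalemxAl -rowE.
apply/eqP => h; have := (row_unitarymxP Uu) j j.
by rewrite h eqxx dotmxE mul0mx mxE => /eqP; rewrite eq_sym oner_eq0.
Qed.

Lemma cplxE (R : rcfType) n (X : 'M[R]_n) : cplx_mx X = map_mx (real_complex R) X.
Proof. by []. Qed.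

Lemma cplx_tC (R : rcfType) n (X : 'M[R]_n) : (cplx_mx X)^t* = cplx_mx X^T.
Proof. by apply/matrixP => i j; rewrite !mxE; apply: conjc_real. Qed.

Lemma normal_of (R : rcfType) n (A : 'M[R[i]]_n) : A^t* = A -> A \is normalmx.
Proof. by move=> h; apply/normalmxP; rewrite h. Qed.

Lemma ReM_real (R : rcfType) (r : R) (z : R[i]) : complex.Re ((r%:C)%C * z) = r * complex.Re z.
Proof. by case: z => a b /=; rewrite mul0r subr0. Qed.

Lemma Re_gt0_norm (R : rcfType) n (v : 'rV[R[i]]_n) : v != 0 -> 0 < complex.Re ((v *m v^t*) 0 0).
Proof.
move=> /dotmx_is_dotmx; rewrite dotmxE.
by case: ((v *m v^t*) 0 0) => a b; rewrite ltcE /= => /andP[].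
Qed.

Lemma Re_addJ (R : rcfType) (z q : R[i]) :
  complex.Re ((z + conjc z) * q) = 2 * complex.Re z * complex.Re q.
Proof. case: z => a b; case: q => c e /=; ring. Qed.

Lemma Re_Nreal (R : rcfType) (c : R) (q : R[i]) :
  complex.Re (- (c%:C)%C * q) = - c * complex.Re q.
Proof. case: q => a b /=; ring. Qed.

Theorem lemma5 (R : rcfType) (n : nat) (M P : 'M[R]_n) (mu : R) :
  hurwitz M -> 0 < mu ->
  sym_posdef P -> P *m M + M^T *m P = - ((2 * mu)%:M) ->
  forall sP sM sMM : R,
    is_sigma_bar P sP -> is_sigma_bar M sM -> is_sigma_bar (M + M^T) sMM ->
    [/\ sP * sM <= - mu,
        sP * sMM >= - (2 * mu)
      & M^T = M -> sP * sM = - mu].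
Proof.
move=> HM Hmu [PT _] HPM sP sM sMM [[lP elP ReP] HP] [[lM elM ReM] HMs] [[lS elS ReS] HS].
have hR : M^T *m P + P *m M = - (2 * mu)%:M.
  have := congr1 trmx HPM; rewrite linearD /= !trmx_mul trmxK PT linearN /= tr_scalar_mx.
  by rewrite addrC.
set Mc := cplx_mx M; set Pc := cplx_mx P.
have hE : Mc^T *m Pc + Pc *m Mc = - ((2 * mu)%:C%C)%:M.
  by rewrite /Mc /Pc !cplxE map_trmx -!map_mxM -map_mxD hR map_mxN map_scalar_mx.
have McC : Mc^t* = Mc^T by rewrite /Mc cplx_tC !cplxE map_trmx.
have McTC : (Mc^T)^t* = Mc by apply/matrixP => i j; rewrite !mxE; apply: conjc_real.
have PcC : Pc^t* = Pc by rewrite /Pc cplx_tC PT.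
have PcN : Pc \is normalmx by apply: normal_of.
have RayP : forall v : 'rV_n, complex.Re ((v *m Pc *m v^t*) 0 0) <= sP * complex.Re ((v *m v^t*) 0 0).
  apply: (@rayleigh R n Pc sP PcN).
  move=> a ha. exact: HP.
have sM_lt0 : sM < 0.
  rewrite -ReM. apply: HM. exact: elM.
have Quad : forall v : 'rV_n, (v *m (Mc^T *m Pc + Pc *m Mc) *m v^t*) 0 0 = - ((2 * mu)%:C)%C * (v *m v^t*) 0 0.
  move=> v; rewrite hE mulmxN mulNmx mul_mx_scalar -scalemxAl -scaleNr.
  by rewrite [LHS]mxE.
have C1 : sP * sM <= - mu.
  have : eigenvalue Mc^T lM.
    rewrite eigenvalue_trmx. exact: elM.
  move/eigenvalueP => [v hv vN0].
  have e2 : Mc *m v^t* = conjc lM *: v^t*.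
    rewrite -McTC -tCmul hv linearZ /=. exact: map_mxZ.
  have t1 : v *m (Mc^T *m Pc) *m v^t* = lM *: (v *m Pc *m v^t*).
    by rewrite mulmxA hv -!scalemxAl.
  have t2 : v *m (Pc *m Mc) *m v^t* = conjc lM *: (v *m Pc *m v^t*).
    by rewrite mulmxA -(mulmxA (v *m Pc)) e2 scalemxAr.
  have := Quad v; rewrite mulmxDr mulmxDl t1 t2 -scalerDl mxE.
  move=> /(congr1 (@complex.Re R)); rewrite Re_addJ Re_Nreal ReM.
  have NP := @Re_gt0_norm _ _ v vN0.
  have Rq := RayP v.
  move=> E.
  move: (complex.Re ((v *m Pc *m v^t*) 0 0)) Rq E => q Rq E.
  move: (complex.Re ((v *m v^t*) 0 0)) NP Rq E => N NP Rq E.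
  have h1 : sP * sM * N <= - mu * N by nra.
  by rewrite -(ler_pM2r NP).
have sP_gt0 : 0 < sP by nra.
have S_eq : Mc + Mc^T = cplx_mx (M + M^T).
  by rewrite /Mc !cplxE map_mxD map_trmx.
have SN : cplx_mx (M + M^T) \is normalmx.
  apply: normal_of; rewrite cplx_tC; congr cplx_mx.
  by rewrite linearD /= trmxK addrC.
have RayS : forall v : 'rV_n, complex.Re ((v *m cplx_mx (M + M^T) *m v^t*) 0 0) <= sMM * complex.Re ((v *m v^t*) 0 0).
  apply: (@rayleigh R n _ sMM SN).
  move=> a ha. exact: HS.
have C2 : - (2 * mu) <= sP * sMM.
  have : eigenvalue Pc lP by exact: elP.
  move/eigenvalueP => [v hv vN0].
  have e2 : Pc *m v^t* = conjc lP *: v^t*.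
    rewrite -PcC -tCmul hv linearZ /=. exact: map_mxZ.
  have NP := @Re_gt0_norm _ _ v vN0.
  have hl : lP = conjc lP.
    have N0 : (v *m v^t*) 0 0 != 0.
      by apply/eqP => h; move: NP; rewrite h /= ltxx.
    apply: (mulIf N0).
    have : (v *m Pc *m v^t*) 0 0 = (v *m (Pc *m v^t*)) 0 0 by rewrite mulmxA.
    rewrite hv e2 -scalemxAl -scalemxAr /=.
    by rewrite [X in X = _]mxE [X in _ = X]mxE.
  have lPr : lP = (sP%:C)%C.
    clear -hl ReP; move: hl ReP; case: lP => a b /= [] hb ha; congr Complex => //.
    lra.
  have t1 : v *m (Mc^T *m Pc) *m v^t* = (sP%:C)%C *: (v *m Mc^T *m v^t*).
    by rewrite -!mulmxA e2 -lPr -hl -!scalemxAr.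
  have t2 : v *m (Pc *m Mc) *m v^t* = (sP%:C)%C *: (v *m Mc *m v^t*).
    by rewrite !mulmxA hv -lPr -!scalemxAl.
  have := Quad v; rewrite mulmxDr mulmxDl t1 t2 -scalerDr -mulmxDl -mulmxDr addrC S_eq.
  rewrite [X in X = _]mxE.
  move=> /(congr1 (@complex.Re R)); rewrite ReM_real Re_Nreal.
  have Rq := RayS v.
  move=> E.
  move: (complex.Re ((v *m cplx_mx (M + M^T) *m v^t*) 0 0)) Rq E => q Rq E.
  move: (complex.Re ((v *m v^t*) 0 0)) NP Rq E => N NP Rq E.
  have h1 : - (2 * mu) * N <= sP * sMM * N by nra.
  by rewrite -(ler_pM2r NP).
split => // MT.
have : eigenvalue (cplx_mx (M + M^T)) lS by exact: elS.
move/eigenvalueP => [v hv vN0].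
have hv2 : v *m Mc = (2^-1 * lS) *: v.
  have h1 : (2^-1 + 2^-1 : R[i]) = 1.
    by field.
  move: hv; rewrite MT /Mc !cplxE map_mxD mulmxDr => hv.
  by rewrite -scalerA -hv scalerDr -scalerDl h1 scale1r.
have h2 : (2^-1 : R[i]) = ((2^-1 : R)%:C)%C by rewrite fmorphV rmorph_nat.
have : complex.Re (2^-1 * lS) <= sM.
  apply: HMs; apply/eigenvalueP; exists v => //.
rewrite h2 ReM_real ReS => hS.
nra.
Qed.
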